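(* Let $H=(V_H,E_H)$ be a graph on $n$ vertices with vertex weights $c:V_H\to[0,1]$, $y\mapsto c_y$. Let $T\subseteq V_H$ with $|T|=n'=n/2$, let $k\le n'/12$ be an integer, and let $S$ be a uniformly random subset of $T$ of size $k$. Then $$\Pr\Big\{\forall x\in V_H:\ \sum_{\substack{(x,y)\in E_H\\ y\in S}}c_y\le\frac{4k}{n'}\sum_{\substack{(x,y)\in E_H\\ y\in V_H\setminus S}}c_y+2\log n\Big\}\ \ge\ 1-o(1),$$ where $o(1)\to0$ as $n\to\infty$. *)

(* Defs.v *)
From HB Require Import structures.
From mathcomp Require Import all_boot all_order all_algebra.
From mathcomp Require Import all_classical all_reals all_analysis.
Set Implicit Arguments. Unset Strict Implicit. Unset Printing Implicit Defensive.
Import Order.TTheory GRing.Theory Num.Theory.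
Local Open Scope ring_scope.

Definition simple_graph (n : nat) (e : rel 'I_n) : Prop :=
  (forall x y, e x y = e y x) /\ (forall x, ~~ e x x).

Definition good_set (R : realType) (n : nat) (e : rel 'I_n) (c : 'I_n -> R)
    (k : nat) (S : {set 'I_n}) : bool :=
  [forall x : 'I_n,
     \sum_(y in S | e x y) c y
       <= (4 * k)%:R / (n./2)%:R * \sum_(y in ~: S | e x y) c y
          + 2 * ln (n%:R : R)].

(* Probability that a uniformly random k-subset S of T is good:
   (number of good k-subsets of T) / C(|T|, k). *)
Definition prob_good (R : realType) (n : nat) (e : rel 'I_n) (c : 'I_n -> R)
    (T : {set 'I_n}) (k : nat) : R :=
  (#|[set S : {set 'I_n} | (S \subset T) && (#|S| == k) && good_set e c k S]|)%:R
    / ('C(#|T|, k))%:R.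

(* Main.v *)
Require Import Defs.
From HB Require Import structures.
From mathcomp Require Import all_boot all_order all_algebra.
From mathcomp Require Import all_classical all_reals all_analysis.
From mathcomp Require Import ring lra zify.
Import Order.TTheory GRing.Theory Num.Theory numFieldNormedType.Exports.
Local Open Scope ring_scope.

Section S.

Variable R : realType.

Lemma expand n (S : {set 'I_n}) (f : 'I_n -> R) :
  \prod_(y in S) (1 + f y) = \sum_(A : {set 'I_n} | A \subset S) \prod_(y in A) f y.
Proof.
rewrite big_mkcond /=.
transitivity (\prod_y ((if y \in S then f y else 0) + 1)).
  by apply: eq_bigr => y _; case: ifP => _; rewrite ?addr0 ?add0r // addrC.
rewrite bigA_distr [RHS]big_mkcond /=; apply: eq_bigr => A _.
case: ifP => AS.
- rewrite [RHS]big_mkcond /=; apply: eq_bigr => y _.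
  by case: ifP => yA //; rewrite (fintype.subsetP AS).
- have [y yA yS] : exists2 y, y \in A & y \notin S by apply/subsetPn; rewrite AS.
  by rewrite (bigD1 y) //= yA (negbTE yS) mul0r.
Qed.

Lemma bin_ratio (N k j : nat) : (j <= k)%N -> (k <= N)%N ->
  ('C(N - j, k - j) * N ^ j <= 'C(N, k) * k ^ j)%N.
Proof.
elim: j => [|j IH] jk kN; first by rewrite !subn0 !expn0.
have IH' := IH (ltnW jk) kN.
have H := mul_bin_diag (N - j) (k - j.+1).
have e1 : ((N - j).-1 = N - j.+1)%N by lia.
have e2 : ((k - j.+1).+1 = k - j)%N by lia.
rewrite e1 e2 in H.
set C1 := 'C(N - j.+1, k - j.+1) in H *.
set C0 := 'C(N - j, k - j) in H IH' *.
have h3 : (C1 * N <= k * C0)%N.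
  have hpos : (0 < N - j)%N by lia.
  have : ((C1 * N) * (N - j) <= (k * C0) * (N - j))%N.
    have h4 : ((k - j) * N <= k * (N - j))%N by nia.
    nia.
  by rewrite leq_pmul2r.
rewrite !expnS.
have : (C1 * N * N ^ j <= k * (C0 * N ^ j))%N by rewrite mulnA leq_mul2r h3 orbT.
nia.
Qed.

Lemma count_bound n (T A : {set 'I_n}) k : A \subset T -> (k <= #|T|)%N ->
  (#|[set S : {set 'I_n} | (S \subset T) && (#|S| == k) && (A \subset S)]|%:R : R)
     <= 'C(#|T|, k)%:R * (k%:R / #|T|%:R) ^+ #|A|.
Proof.
move=> AT kT.
set X := [set S | _].
have [Ak|kA] := leqP #|A| k; last first.
  have -> : X = finset.set0.
    apply/setP => S; rewrite !inE; apply/negP => /andP [/andP [_ /eqP Sk] AS].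
    by move: (subset_leq_card AS); rewrite Sk leqNgt kA.
  rewrite cards0 mulr_ge0 // exprn_ge0 // divr_ge0 //.
have K (S : {set 'I_n}) : A \subset S -> (S :\: A) :|: A = S.
  move=> AS; apply/setP => x; rewrite !inE.
  by case: (boolP (x \in A)) => xA /=; [rewrite (fintype.subsetP AS) | rewrite orbF].
pose f := fun S : {set 'I_n} => S :\: A.
have inj : {in X &, injective f}.
  move=> S1 S2; rewrite !inE => /andP [_ h1] /andP [_ h2] e.
  by rewrite -(K _ h1) -(K _ h2); congr (_ :|: _).
have sub : f @: X \subset [set B : {set 'I_n} | (B \subset T :\: A) & (#|B| == k - #|A|)%N].
  apply/fintype.subsetP => B /imsetP [S]; rewrite !inE => /andP [/andP [ST /eqP Sk] AS] ->.
  by rewrite /f finset.setSD //= cardsDS // Sk eqxx.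
have le1 := subset_leq_card sub.
rewrite card_in_imset // cards_draws cardsDS // in le1.
have le2 := @bin_ratio #|T| k #|A| Ak kT.
have Tpos : (0 < #|T| ^ #|A|)%N.
  rewrite expn_gt0; lia.
rewrite expr_div_n -!natrX mulrA ler_pdivlMr ?ltr0n // -!natrM ler_nat.
exact: leq_trans (leq_mul le1 (leqnn _)) le2.
Qed.

Lemma core n (T : {set 'I_n}) k (b : 'I_n -> R) : (forall y, 0 <= b y) -> (k <= #|T|)%N ->
  \sum_(S : {set 'I_n} | (S \subset T) && (#|S| == k)) \prod_(y in S) (1 + b y)
   <= 'C(#|T|, k)%:R * \prod_(y in T) (1 + k%:R / #|T|%:R * b y).
Proof.
move=> b0 kT.
set p := k%:R / #|T|%:R.
have p0 : 0 <= p by rewrite divr_ge0.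
rewrite (eq_bigr (fun S : {set 'I_n} => \sum_(A : {set 'I_n} | A \subset S) \prod_(y in A) b y)); last by move=> S _; rewrite expand.
rewrite (exchange_big_dep (fun A : {set 'I_n} => A \subset T)) /=; last first.
  by move=> S A /andP [ST _] AS; exact: fintype.subset_trans AS ST.
rewrite expand mulr_sumr; apply: ler_sum => A AT.
set X := [set S : {set 'I_n} | (S \subset T) && (#|S| == k) && (A \subset S)].
rewrite (eq_bigl (fun S => S \in X)); last by move=> S; rewrite inE.
rewrite sumr_const.
have -> : \prod_(y in A) (p * b y) = p ^+ #|A| * \prod_(y in A) b y.
  by rewrite big_split /= prodr_const.
rewrite -[X in X <= _]mulr_natr. rewrite mulrA [X in _ <= X]mulrC.
apply: ler_wpM2l; first exact: prodr_ge0.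
exact: count_bound.
Qed.
Lemma expconv (l a : R) : 0 <= a <= 1 -> expR (l * a) <= 1 + (expR l - 1) * a.
Proof.
case/andP => a0 a1.
have := @convex_expR R (Itv01 a0 a1) l 0.
rewrite !convRE /= expR0 mulr0 addr0 mulr1 (mulrC l).
change (unstable.onem a) with (1 - a). lra.
Qed.

Lemma ln4_ge : 4/3 <= ln (4 : R).
Proof.
have h1 : expR (1/30 : R) <= 30/29.
  have := expR_ge1Dx (- (1/30 : R)).
  rewrite expRN => h.
  have hp : 0 < expR (1/30 : R) by exact: expR_gt0.
  rewrite -(invrK (expR _)). rewrite -[X in _ <= X](invrK (30/29 : R)).
  rewrite lef_pV2 ?posrE ?invr_gt0 //; last (apply: le_trans h; lra). all: try lra.
have h2 : expR (4/3 : R) <= 4.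
  have -> : (4/3 : R) = 40%:R * (1/30) by lra.
  rewrite expRM_natl.
  apply: le_trans (_ : (30/29 : R) ^+ 40 <= 4); last by lra.
  by apply: lerXn2r; rewrite ?nnegrE ?expR_ge0 //; lra.
by rewrite -ler_expR lnK // posrE; lra.
Qed.

Definition goodx n (e : rel 'I_n) (c : 'I_n -> R) k (S : {set 'I_n}) (x : 'I_n) : bool :=
  \sum_(y in S | e x y) c y
       <= (4 * k)%:R / (n./2)%:R * \sum_(y in ~: S | e x y) c y
          + 2 * ln (n%:R : R).
Arguments goodx {n}.

Lemma per_vertex n (e : rel 'I_n) (c : 'I_n -> R) (T : {set 'I_n}) k (x : 'I_n) :
  (forall y, 0 <= c y <= 1) -> #|T| = n./2 -> (12 * k <= n./2)%N ->
  \sum_(S : {set 'I_n} | (S \subset T) && (#|S| == k)) (if goodx e c k S x then 0 else 1 : R)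
   <= 'C(#|T|, k)%:R / (n%:R ^+ 2).
Proof.
move=> c01 hT hk.
have n0 : (0 < n)%N by case: n x {e c T hT hk c01} => [[]|].
have kT : (k <= #|T|)%N by rewrite hT; lia.
pose a y := if e x y then c y else 0.
have a0 y : 0 <= a y by rewrite /a; case: ifP => _ //; case/andP: (c01 y).
have a1 y : a y <= 1 by rewrite /a; case: ifP => _ //; case/andP: (c01 y).
pose W := \sum_y a y.
have W0 : 0 <= W by apply: sumr_ge0.
have hX (S : {set 'I_n}) : \sum_(y in S | e x y) c y = \sum_(y in S) a y by rewrite big_mkcondr.
have hY S : \sum_(y in ~: S | e x y) c y = W - \sum_(y in S) a y.
  rewrite big_mkcondr /W [X in _ = X - _](bigID (fun y => y \in S)) /=.
  have -> : \sum_(i | i \notin S) a i = \sum_(i in ~: S) a i.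
    by apply: eq_bigl => y; rewrite finset.in_setC.
  by rewrite /a; lra.
set N := n./2.
pose p : R := k%:R / N%:R.
have p0 : 0 <= p by rewrite divr_ge0.
have p12 : p <= 1/12.
  rewrite /p; have [N0|Npos] := posnP N; first by rewrite N0 invr0 mulr0.
  rewrite ler_pdivrMr ?ltr0n //.
  have : (k * 12 <= N)%N by lia.
  rewrite -(ler_nat R) natrM => h; lra.
have q4 : (4 * k)%:R / N%:R = 4 * p :> R by rewrite /p natrM mulrA.
pose l : R := ln n%:R.
have l0 : 0 <= l by rewrite /l ln_ge0 // ler1n.
pose lam : R := ln 4.
have lam43 : 4/3 <= lam := ln4_ge.
have elam : expR lam = 4 by rewrite /lam lnK // posrE.
pose Z (S : {set 'I_n}) := \prod_(y in S) (1 + 3 * a y).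
pose M := 3 * p * W + 2 * l.
have claim1 (S : {set 'I_n}) : (if goodx e c k S x then 0 else 1) * expR M <= Z S.
  rewrite /goodx hX hY q4; case: ifP => [_|/negbT].
    by rewrite mul0r; apply: prodr_ge0 => y _; have := a0 y; lra.
  rewrite -ltNge mul1r => bad.
  set X := \sum_(y in S) a y in bad.
  have {}bad : 4 * p * (W - X) + 2 * l < X := bad.
  have XW : X <= W.
    rewrite /W [X in _ <= X](bigID (fun y => y \in S)) /= -/X.
    have : 0 <= \sum_(i | i \notin S) a i by apply: sumr_ge0.
    lra.
  have key : M <= lam * X.
    have h1 : 0 <= p * W * (4 * lam - 3 - 12 * p) by apply: mulr_ge0; [apply: mulr_ge0|lra].
    have h2 : 0 <= l * (2 * lam - 2 - 8 * p) by apply: mulr_ge0 => //; lra.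
    have h3 : lam * (4 * p * W + 2 * l) < lam * ((1 + 4 * p) * X).
      rewrite ltr_pM2l; last by lra.
      lra.
    have h4 : 0 < (1 + 4 * p) * (lam * X - M) by rewrite /M; nra.
    have : 0 < lam * X - M by rewrite -(pmulr_rgt0 _ (_ : 0 < 1 + 4 * p)) //; lra.
    lra.
  apply: (le_trans (_ : expR M <= expR (lam * X))); first by rewrite ler_expR.
  rewrite /X mulr_sumr expR_sum /Z.
  apply: ler_prod => y _; rewrite expR_ge0 /=.
  have := expconv lam (a y); rewrite elam => h.
  have : expR (lam * a y) <= 1 + (4 - 1) * a y by apply: h; rewrite a0 a1.
  lra.
have claim2 : \sum_(S : {set 'I_n} | (S \subset T) && (#|S| == k)) Z S
     <= 'C(#|T|, k)%:R * expR (3 * p * W).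
  apply: le_trans (@core n T k (fun y => 3 * a y) _ kT) _.
    by move=> y; have := a0 y; lra.
  apply: ler_wpM2l => //.
  rewrite hT -/N -/p.
  apply: le_trans (_ : \prod_(y in T) expR (p * (3 * a y)) <= _).
    apply: ler_prod => y _; rewrite expR_ge1Dx andbT.
    by have := a0 y; have := p0; nra.
  rewrite -expR_sum ler_expR.
  rewrite -mulr_sumr -mulr_sumr mulrA [p * 3]mulrC ler_wpM2l //; first lra.
  rewrite /W [X in _ <= X](bigID (fun y => y \in T)) /= lerDl; exact: sumr_ge0.
have cl : \sum_(S : {set 'I_n} | (S \subset T) && (#|S| == k)) (if goodx e c k S x then 0 else 1 : R) * expR M
     <= 'C(#|T|, k)%:R * expR (3 * p * W).
  apply: le_trans claim2; exact: ler_sum.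
rewrite -mulr_suml in cl.
have eM : expR (3 * p * W) / expR M = (n%:R ^+ 2)^-1.
  rewrite -expRB /M.
  have -> : 3 * p * W - (3 * p * W + 2 * l) = - (2%:R * l) by rewrite /=; lra.
  by rewrite expRN expRM_natl /l lnK // posrE ltr0n.
rewrite -eM mulrA ler_pdivlMr ?expR_gt0 //.
Qed.

Lemma prob_bound n (e : rel 'I_n) (c : 'I_n -> R) (T : {set 'I_n}) k :
  (forall y, 0 <= c y <= 1) -> #|T| = n./2 -> (12 * k <= n./2)%N ->
  1 - (n%:R)^-1 <= prob_good e c T k.
Proof.
move=> c01 hT hk.
have kT : (k <= #|T|)%N by rewrite hT; lia.
set C := 'C(#|T|, k).
have Cpos : (0 < C)%N by rewrite bin_gt0.
pose D := fun S : {set 'I_n} => (S \subset T) && (#|S| == k).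
have hC : (C%:R : R) = \sum_(S | D S) 1.
  rewrite /C -cards_draws -sum1_card natr_sum.
  by apply: eq_bigl => S; rewrite inE.
have hG : ((#|[set S : {set 'I_n} | (S \subset T) && (#|S| == k) && good_set e c k S]|)%:R : R)
   = \sum_(S | D S) (if good_set e c k S then 1 else 0).
  rewrite -sum1_card natr_sum -big_mkcondr.
  by apply: eq_bigl => S; rewrite inE.
have hbad : C%:R - \sum_(S | D S) (if good_set e c k S then 1 else 0) <= C%:R * (n%:R)^-1 :> R.
  rewrite {1}hC -sumrB.
  apply: le_trans (_ : \sum_(S | D S) \sum_x (if goodx e c k S x then 0 else 1) <= _).
    apply: ler_sum => S _.
    case: ifP => [_|/negbT]; first by rewrite subrr; apply: sumr_ge0 => x _; case: ifP => //.
    rewrite subr0 negb_forall => /existsP [x bx].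
    rewrite (bigD1 x) //= /goodx.
    have -> : (\sum_(y in S | e x y) c y <= (4 * k)%:R / (n./2)%:R * \sum_(y in ~: S | e x y) c y + 2 * ln (n%:R : R)) = false by apply/negbTE.
    rewrite lerDl; apply: sumr_ge0 => y _; case: ifP => //.
  rewrite exchange_big /=.
  apply: le_trans (_ : \sum_(x : 'I_n) (C%:R / (n%:R ^+ 2)) <= _).
    by apply: ler_sum => x _; exact: per_vertex.
  rewrite sumr_const card_ord.
  have hm (m : nat) : (m%:R ^+ 2)^-1 * m%:R = (m%:R)^-1 :> R.
    case: m => [|m]; first by rewrite mulr0 invr0.
    by rewrite expr2 invfM -mulrA mulVf ?mulr1 // pnatr_eq0.
  by rewrite -[X in X <= _]mulr_natr -mulrA hm.
rewrite /prob_good hG.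
rewrite ler_pdivlMr ?ltr0n // -/C.
lra.
Qed.

End S.

Local Open Scope classical_set_scope.

Theorem lemma11 (R : realType) :
  exists eps : nat -> R, eps m @[m --> \oo] --> (0 : R) /\
    forall (n : nat) (e : rel 'I_n) (c : 'I_n -> R) (T : {set 'I_n}) (k : nat),
      simple_graph e ->
      (forall y, 0 <= c y <= 1) ->
      ~~ odd n ->
      #|T| = n./2 ->
      (12 * k <= n./2)%N ->
      1 - eps n <= prob_good e c T k.
Proof.
exists (fun m => harmonic m * 2); split.
  rewrite -(mul0r 2); apply: cvgMr_tmp; exact: cvg_harmonic.
move=> n e c T k _ c01 _ hT hk.
apply: (le_trans _ (@prob_bound R n e c T k c01 hT hk)).
rewrite lerD2l lerN2 /harmonic /=.
case: n {e c T hT hk c01} => [|m]; first by rewrite invr0 mulr_ge0 // invr_ge0.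
rewrite mulrC -[X in X <= _]div1r ler_pdivrMr ?ltr0n // mulrAC ler_pdivlMr ?ltr0n //.
rewrite mul1r -natrM ler_nat; lia.
Qed.
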